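(* Under the standing assumptions, let $\{x_i\}_{i=1}^N$ be a solution of the delayed Hegselmann–Krause system. Then for all $i,j=1,\dots,N$, every unit vector $v\in\mathbb{R}^d$ and every $n\in\mathbb{N}_0$, $$\langle x_i(t)-x_j(t),v\rangle\le e^{-K(t-t_0)}\langle x_i(t_0)-x_j(t_0),v\rangle+\big(1-e^{-K(t-t_0)}\big)D_n\qquad\text{for all }t\ge t_0\ge n\bar\tau.$$ Moreover, for every $n\in\mathbb{N}_0$, $$D_{n+1}\le e^{-K\bar\tau}d(n\bar\tau)+\big(1-e^{-K\bar\tau}\big)D_n.$$
   Context: Standing assumptions: $N\ge 2$, $d\ge 1$, $\bar\tau>0$; $\tau:[0,\infty)\to[0,\bar\tau]$ continuous; $\psi:\mathbb{R}^d\times\mathbb{R}^d\to\mathbb{R}$ continuous, bounded and strictly positive, $K:=\|\psi\|_\infty$; initial data $x_i^0:[-\bar\tau,0]\to\mathbb{R}^d$ continuous. The delayed Hegselmann–Krause system is $$\frac{d}{dt}x_i(t)=\frac{1}{N-1}\sum_{j\ne i}\psi\big(x_i(t),x_j(t-\tau(t))\big)\big(x_j(t-\tau(t))-x_i(t)\big),\quad t>0,$$ with $x_i=x_i^0$ on $[-\bar\tau,0]$; a solution means continuous $x_i:[-\bar\tau,\infty)\to\mathbb{R}^d$, differentiable on $(0,\infty)$, satisfying this. $d(t):=\max_{i,j}|x_i(t)-x_j(t)|$. For $n\in\mathbb{N}_0$, $D_n:=\max_{i,j=1,\dots,N}\max_{s,t\in[n\bar\tau-\bar\tau,\,n\bar\tau]}|x_i(s)-x_j(t)|$.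 *)

(* Defs.v *)
From HB Require Import structures.
From mathcomp Require Import all_boot all_order all_algebra.
From mathcomp Require Import all_classical all_reals all_analysis.
Set Implicit Arguments. Unset Strict Implicit. Unset Printing Implicit Defensive.
Import Order.TTheory GRing.Theory Num.Theory.
Import numFieldNormedType.Exports.
Local Open Scope classical_set_scope.
Local Open Scope ring_scope.

Definition dotv {R : realType} {d : nat} (u v : 'rV[R]_d) : R :=
  \sum_(k < d) u ord0 k * v ord0 k.
Definition enorm {R : realType} {d : nat} (u : 'rV[R]_d) : R :=
  Num.sqrt (dotv u u).

Definition supnorm {R : realType} {d : nat} (psi : 'rV[R]_d -> 'rV[R]_d -> R) : R :=
  sup (range (fun p : 'rV[R]_d * 'rV[R]_d => `|psi p.1 p.2|)).

Definition hk_rhs {R : realType} {N d : nat} (psi : 'rV[R]_d -> 'rV[R]_d -> R)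
  (tau : R -> R) (x : 'I_N -> R -> 'rV[R]_d) (i : 'I_N) (t : R) : 'rV[R]_d :=
  (N.-1)%:R^-1 *: \sum_(j < N | j != i)
     (psi (x i t) (x j (t - tau t)) *: (x j (t - tau t) - x i t)).

Definition hk_solution {R : realType} {N d : nat} (taubar : R)
  (psi : 'rV[R]_d -> 'rV[R]_d -> R) (tau : R -> R)
  (x0 x : 'I_N -> R -> 'rV[R]_d) : Prop :=
  (forall i : 'I_N, {within `[- taubar, +oo[, continuous (x i)}) /\
  (forall (i : 'I_N) (s : R), - taubar <= s <= 0 -> x i s = x0 i s) /\
  (forall (i : 'I_N) (t : R), 0 < t -> is_derive t (1 : R) (x i) (hk_rhs psi tau x i t)).

Definition diam {R : realType} {N d : nat} (x : 'I_N -> R -> 'rV[R]_d) (t : R) : R :=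
  \big[Num.max/0]_(i < N) \big[Num.max/0]_(j < N) enorm (x i t - x j t).

(* D_n = max_{i,j} max_{s,t in [n taubar - taubar, n taubar]} |x_i(s) - x_j(t)|
   (written as a sup; the max is attained by continuity) *)
Definition Dn {R : realType} {N d : nat} (taubar : R) (x : 'I_N -> R -> 'rV[R]_d)
  (n : nat) : R :=
  sup [set r : R | exists (i j : 'I_N) (s t : R),
       n%:R * taubar - taubar <= s <= n%:R * taubar /\
       n%:R * taubar - taubar <= t <= n%:R * taubar /\
       r = enorm (x i s - x j t)].

(* Main.v *)
Require Import Defs.
From HB Require Import structures.
From mathcomp Require Import all_boot all_order all_algebra.
From mathcomp Require Import all_classical all_reals all_analysis.
From mathcomp Require Import lra ring.
Import Order.TTheory GRing.Theory Num.Theory.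
Import numFieldNormedType.Exports.
Local Open Scope classical_set_scope.
Local Open Scope ring_scope.
Set Implicit Arguments. Unset Strict Implicit.


Section Helpers.
Variable R : realType.

Lemma within_ed (f : R -> R) (A : set R) x :
  {within A, continuous f} -> A x ->
  forall e, 0 < e -> exists2 del, 0 < del & forall y, A y -> `|y - x| < del -> `|f y - f x| < e.
Proof.
move=> /subspace_continuousP cf Ax e e0.
have := cf x Ax => /cvgrPdist_lt /(_ e e0).
rewrite near_withinE => /nbhs_ballP [del del0 H].
exists del => // y Ay yx; rewrite distrC; apply: (H y) => //.
by rewrite /ball /= distrC.
Qed.

Lemma deriv_neg_left (g : R -> R) (t l : R) : is_derive t (1:R) g l -> l < 0 ->
  exists2 del, 0 < del & forall s, t - del < s -> s < t -> g t < g s.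
Proof.
move=> [dg dv] l0.
have cv : (fun h : R => h^-1 *: ((g \o shift t) (h *: 1) - g t)) @ 0^' --> l.
  by rewrite -dv; exact: dg.
have : \forall h \near 0^', h^-1 *: ((g \o shift t) (h *: (1:R)) - g t) < 0.
  exact: cvgr_lt cv _ l0.
rewrite near_withinE => /nbhs_ballP [del del0 H].
exists del => // s h1 h2.
have hs : s - t != 0 by rewrite subr_eq0 lt_eqF.
have := H (s - t) _ hs.
rewrite /= scaler1 addrNK => /(_ _) hq.
have : (s - t)^-1 * (g s - g t) < 0.
  apply: hq; rewrite /ball /= sub0r normrN ltr0_norm ?subr_lt0 //.
  by rewrite opprB ltrBlDr -ltrBlDl.
rewrite nmulr_rlt0 ?invr_lt0 ?subr_lt0 // subr_gt0 //.
Qed.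

Lemma pick_left (a ts del : R) : a < ts -> 0 < del ->
  exists r, [/\ a <= r, r < ts, ts - del < r & `|r - ts| < del].
Proof.
move=> ats del0; set m := Num.min del (ts - a).
have m0 : 0 < m by rewrite lt_min del0 subr_gt0.
have md : m <= del by rewrite ge_min lexx.
have ma : m <= ts - a by rewrite ge_min lexx orbT.
exists (ts - m / 2); split.
- rewrite lerBrDr -lerBrDl; apply: le_trans ma; rewrite ler_pdivrMr // ler_peMr ?ltW //.
  by rewrite ?ler1n ?ltr1n.
- by rewrite ltrBlDr ltrDl divr_gt0.
- rewrite ltrD2l ltrN2; apply: lt_le_trans md; rewrite ltr_pdivrMr // ltr_pMr //.
  by rewrite ?ler1n ?ltr1n.
- rewrite addrAC subrr add0r normrN gtr0_norm ?divr_gt0 //.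
  apply: lt_le_trans md; rewrite ltr_pdivrMr // ltr_pMr //.
  by rewrite ?ler1n ?ltr1n.
Qed.

End Helpers.

Unset Implicit Arguments.


Unset Implicit Arguments.
Section Core.
Variables (R : realType) (N : nat) (taubar c : R) (tau : R -> R)
  (w : 'I_N -> 'I_N -> R -> R) (y : 'I_N -> R -> R).
Hypothesis tb0 : 0 < taubar.
Hypothesis c0 : 0 <= c.
Hypothesis w0 : forall k j t, 0 <= w k j t.
Hypothesis htau : forall t, 0 <= t -> 0 <= tau t <= taubar.
Hypothesis cy : forall k, {within `[- taubar, +oo[, continuous (y k)}.
Hypothesis dy : forall (k : 'I_N) (t : R), 0 < t -> is_derive t (1:R) (y k)
  (c * \sum_(j < N | j != k) w k j t * (y j (t - tau t) - y k t)).

Lemma ed_y k s : - taubar <= s -> forall e, 0 < e ->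
  exists2 del, 0 < del & forall r, - taubar <= r -> `|r - s| < del -> `|y k r - y k s| < e.
Proof.
move=> hs e e0.
have [del del0 H] := @within_ed R (y k) _ s (cy k) ltac:(by rewrite /= in_itv /= hs) e e0.
exists del => // r hr; apply: H; by rewrite /= in_itv /= hr.
Qed.

Lemma invariance (a M : R) : 0 <= a ->
  (forall k s, a - taubar <= s <= a -> y k s <= M) ->
  forall k t, a - taubar <= t -> y k t <= M.
Proof.
move=> a0 HW.
suff H : forall e, 0 < e -> forall k t, a - taubar <= t -> y k t < M + e * expR t.
  move=> k t ht; apply/ler_addgt0Pr => e e0.
  have := H (e / expR t) (divr_gt0 e0 (expR_gt0 t)) k t ht.
  by rewrite divfK ?gt_eqF ?expR_gt0 // => /ltW.
move=> e e0.
pose b := fun s => M + e * expR s.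
have bW : forall k s, a - taubar <= s <= a -> y k s < b s.
  move=> k s hs; apply: le_lt_trans (HW k s hs) _.
  by rewrite /b ltrDl mulr_gt0 // expR_gt0.
have binc : forall s r, s <= r -> b s <= b r.
  by move=> s r sr; rewrite /b lerD2l ler_pM2l // ler_expR.
suff main : ~ (exists k s, a - taubar <= s /\ b s <= y k s).
  move=> k s hs; rewrite ltNge; apply/negP => hb; apply: main; by exists k, s.
move=> [k0 [s0 [hs0 hb0]]].
pose S := [set s | a <= s /\ exists k, b s <= y k s].
have as0 : a <= s0.
  rewrite leNgt; apply/negP => h.
  by have := bW k0 s0 ltac:(by rewrite hs0 ltW); rewrite ltNge hb0.
have nS : S !=set0 by exists s0; split => //; exists k0.
have lbS : lbound S a by move=> s [].
have hlb : has_lbound S by exists a.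
set ts := inf S.
have ats : a <= ts := lb_le_inf nS lbS.
have tsle : forall s, S s -> ts <= s := fun s Ss => ge_inf hlb Ss.
have left : forall s, a <= s -> s < ts -> forall k, y k s < b s.
  move=> s as1 sts k; rewrite ltNge; apply/negP => h.
  by have := tsle s (conj as1 (ex_intro _ k h)); rewrite leNgt sts.
have tsdom : - taubar <= ts.
  by apply: le_trans ats; apply: le_trans a0; rewrite oppr_le0 ltW.
have exk : exists k, b ts <= y k ts.
  apply: contrapT => nex.
  have all : forall k, y k ts < b ts.
    by move=> k; rewrite ltNge; apply/negP => h; apply: nex; exists k.
  have : \forall r \near ts, forall k, - taubar <= r -> ts <= r -> y k r < b r.
    apply: (@filter_forall R _ (fun k r => - taubar <= r -> ts <= r -> y k r < b r) (nbhs ts) _) => k.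
    have e1 : 0 < b ts - y k ts by rewrite subr_gt0.
    have [del del0 Hd] := ed_y k ts tsdom _ e1.
    apply/nbhs_ballP; exists del => // r hr hrd tsr.
    have h2 := Hd r hrd ltac:(by rewrite distrC).
    have : y k r - y k ts < b ts - y k ts by apply: le_lt_trans (ler_norm _) h2.
    rewrite ltrD2r => h.
    exact: lt_le_trans (binc _ _ tsr).
  move=> /nbhs_ballP [del del0 Hd].
  have : ts + del / 2 <= ts.
    rewrite {2}/ts; apply: (lb_le_inf nS) => s [as1 [k hk]].
    rewrite leNgt; apply/negP => hs.
    have [sts|tss] := ltP s ts.
      by have := left s as1 sts k; rewrite ltNge hk.
    have := Hd s _ k _ tss.
    have hball : ball ts del s.
      rewrite /ball /= distrC ger0_norm ?subr_ge0 //.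
      rewrite ltrBlDl; apply: lt_trans hs _.
      by rewrite ltrD2l ltr_pdivrMr // ltr_pMr // ltr1n.
    have hdom : - taubar <= s by apply: le_trans tsdom _.
    by have := Hd s hball k hdom tss; rewrite ltNge hk.
  by rewrite gerDl leNgt divr_gt0.
case: exk => k hk.
have ats' : a < ts.
  rewrite lt_neqAle ats andbT; apply/eqP => eq.
  have := bW k ts; rewrite -eq lerBlDr lerDl ltW // lexx => /(_ isT).
  by rewrite ltNge eq hk.
have ts0 : 0 < ts by apply: le_lt_trans a0 ats'.
have allj : forall j, y j ts <= b ts.
  move=> j; rewrite leNgt; apply/negP => hj.
  have e1 : 0 < y j ts - b ts by rewrite subr_gt0.
  have [del del0 Hd] := ed_y j ts tsdom _ e1.
  have [r [ar rts _ rd]] := pick_left ats' del0.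
  have rdom : - taubar <= r by apply: le_trans ar; apply: le_trans a0; rewrite oppr_le0 ltW.
  have h2 := Hd r rdom rd.
  have : y j ts - y j r < y j ts - b ts.
    by apply: le_lt_trans h2; rewrite distrC ler_norm.
  rewrite ltrD2l ltrN2 => h3.
  have := left r ar rts j; rewrite ltNge; move/negP; apply.
  exact: le_trans (binc _ _ (ltW rts)) (ltW h3).
pose D := c * \sum_(j < N | j != k) w k j ts * (y j (ts - tau ts) - y k ts).
have D0 : D <= 0.
  apply: mulr_ge0_le0 => //; apply: sumr_le0 => j _.
  apply: mulr_ge0_le0 => //; rewrite subr_le0.
  have [t1 t2] := andP (htau ts (ltW ts0)).
  apply: (@le_trans _ _ (b ts)) => //.
  have [lt|eq] := ltP (ts - tau ts) ts; last first.
    have -> : ts - tau ts = ts by apply/eqP; rewrite eq_le eq lerBlDr lerDl t1.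
    exact: allj.
  apply: ltW; apply: lt_le_trans (binc _ _ (ltW lt)).
  have [sa|as1] := ltP (ts - tau ts) a.
    apply: bW; rewrite (ltW sa) andbT; apply: lerD => //; by rewrite lerN2.
  exact: left.
have dg : is_derive ts (1:R) (fun s => y k s - b s) (D - e * expR ts).
  have dyk : is_derive ts (1:R) (y k) D := dy k ts ts0.
  have db : is_derive ts (1:R) (cst M + e *: (expR : R -> R)) (0 + e *: expR ts).
    by apply: is_deriveD.
  have dg' := is_deriveB dyk db.
  have -> : (fun s => y k s - b s) = y k - (cst M + e *: (expR : R -> R)).
    by apply: funext => s.
  apply: is_derive_eq dg' _.
  by rewrite add0r.
have l0 : D - e * expR ts < 0.
  by rewrite subr_lt0; apply: le_lt_trans D0 _; rewrite mulr_gt0 // expR_gt0.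
have [del del0 Hd] := deriv_neg_left dg l0.
have [r [ar rts rd _]] := pick_left ats' del0.
have := Hd r rd rts.
have := left r ar rts k.
rewrite -subr_lt0 => h1 h2.
have : y k ts - b ts < 0 by apply: lt_trans h2 h1.
by rewrite subr_lt0 ltNge hk.
Qed.

Lemma exp_upper (a M K : R) : 0 <= a -> 0 <= K ->
  (forall k j t, w k j t <= K) -> c * (N.-1)%:R <= 1 ->
  (forall k t, a - taubar <= t -> y k t <= M) ->
  forall i t0 t, a <= t0 -> t0 <= t ->
  y i t <= expR (- K * (t - t0)) * y i t0 + (1 - expR (- K * (t - t0))) * M.
Proof.
move=> a0 K0 wK cN inv i t0 t at0 t0t.
pose f := fun s => expR (K * (s - t0)).
pose g := fun s => y i s - M.
have df : forall z, is_derive z (1:R) f (expR (K * (z - t0)) * K).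
  move=> z.
  have dl : is_derive z (1:R) (fun s => K * (s - t0)) K.
    have d1 : is_derive z (1:R) (K \*: (id - cst t0)) (K *: (1 - 0)).
      by apply: is_deriveZ.
    have -> : (fun s => K * (s - t0)) = (K \*: (id - cst t0)) by apply: funext.
    by apply: is_derive_eq d1 _; rewrite subr0 scaler1.
  exact: (is_derive1_comp (f := expR) (g := fun s => K * (s - t0))).
have dh : forall z : R, 0 < z -> is_derive z (1:R) (f \* g)
    (f z *: (c * \sum_(j < N | j != i) w i j z * (y j (z - tau z) - y i z))
     + g z *: (expR (K * (z - t0)) * K)).
  move=> z z0.
  have dg : is_derive z (1:R) g (c * \sum_(j < N | j != i) w i j z * (y j (z - tau z) - y i z) - 0).
    exact: is_deriveB (dy i z z0) (is_derive_cst M z 1).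
  have := is_deriveM (df z) dg; rewrite subr0; exact.
have h0 : 0 <= t0 by apply: le_trans a0 at0.
have cf : continuous f.
  move=> z; case: (df z) => + _.
  by move/derivable1_diffP/differentiable_continuous.
have cyi : {within `[t0, t], continuous (y i)}.
  apply: continuous_subspaceW (cy i) => s; rewrite /= !in_itv /= => /andP[h1 _].
  rewrite andbT; apply: le_trans h1; apply: le_trans h0; rewrite oppr_le0 ltW //.
have cg : {within `[t0, t], continuous g}.
  move=> z; apply: continuousB (cyi z) _; exact: cvg_cst.
have cf' : {within `[t0, t], continuous f} := continuous_subspaceT cf.
have ch : {within `[t0, t], continuous (f \* g)}.
  move=> z; exact: continuousM (cf' z) (cg z).
have hle : (f \* g) t <= (f \* g) t0.
  apply: (ler0_derive1_nincr _ _ ch) => //.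
  - move=> z; rewrite in_itv /= => /andP[z1 _].
    by case: (dh z (le_lt_trans h0 z1)).
  - move=> z; rewrite in_itv /= => /andP[z1 _].
    have z0 : 0 < z by apply: le_lt_trans h0 z1.
    rewrite derive1E; case: (dh z z0) => _ ->.
    have fpos : 0 < f z by rewrite /f expR_gt0.
    have yM : y i z <= M.
      apply: inv; rewrite lerBlDr; apply: le_trans at0 _; apply: le_trans (ltW z1) _.
      by rewrite lerDl ltW.
    set D := c * _.
    have Dle : D <= K * (M - y i z).
      apply: (@le_trans _ _ (c * \sum_(j < N | j != i) (K * (M - y i z)))).
        rewrite /D; apply: (ler_wpM2l c0); apply: ler_sum => j _.
        apply: (@le_trans _ _ (w i j z * (M - y i z))).
          apply: (ler_wpM2l (w0 _ _ _)); rewrite lerD2r; apply: inv.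
          have [_ t2] := andP (htau z (ltW z0)).
          apply: lerD; first exact: le_trans at0 (ltW z1).
          by rewrite lerN2.
        by apply: (ler_wpM2r _ (wK _ _ _)); rewrite subr_ge0.
      rewrite sumr_const cardC1 card_ord -mulr_natr.
      have X0 : 0 <= K * (M - y i z) by rewrite mulr_ge0 // subr_ge0.
      nra.
    have := ler_wpM2l (ltW fpos) Dle.
    rewrite /g /= -/(f z).
    move=> hh; change (f z * D + (y i z - M) * (f z * K) <= 0); nra.
move: hle; rewrite /= /f /g subrr mulr0 expR0 mul1r => hle.
have Fpos : 0 < expR (K * (t - t0)) by rewrite expR_gt0.
have : y i t - M <= (expR (K * (t - t0)))^-1 * (y i t0 - M).
  by rewrite -(ler_pM2l Fpos) mulrA mulfV ?gt_eqF // mul1r.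
rewrite mulNr expRN => h; lra.
Qed.

End Core.

Set Implicit Arguments.


Section Vec.
Variables (R : realType) (d : nat).
Implicit Types (u v : 'rV[R]_d).

Lemma dotvD u u' v : dotv (u + u') v = dotv u v + dotv u' v.
Proof. by rewrite /dotv -big_split /=; apply: eq_bigr => k _; rewrite mxE mulrDl. Qed.

Lemma dotv0 v : dotv 0 v = 0.
Proof. by rewrite /dotv big1 // => k _; rewrite mxE mul0r. Qed.

Lemma dotvZ a u v : dotv (a *: u) v = a * dotv u v.
Proof. by rewrite /dotv mulr_sumr; apply: eq_bigr => k _; rewrite mxE mulrA. Qed.

Lemma dotvN u v : dotv (- u) v = - dotv u v.
Proof. by rewrite -scaleN1r dotvZ mulN1r. Qed.

Lemma dotvB u u' v : dotv (u - u') v = dotv u v - dotv u' v.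
Proof. by rewrite dotvD dotvN. Qed.

Lemma dotv_sum (I : Type) (r : seq I) (P : pred I) (F : I -> 'rV[R]_d) v :
  dotv (\sum_(j <- r | P j) F j) v = \sum_(j <- r | P j) dotv (F j) v.
Proof. exact: (big_morph (fun u => dotv u v) (fun a b => dotvD a b v) (dotv0 v)). Qed.

Lemma dotvC u v : dotv u v = dotv v u.
Proof. by apply: eq_bigr => k _; rewrite mulrC. Qed.

Lemma dotv_ge0 u : 0 <= dotv u u.
Proof. by apply: sumr_ge0 => k _; rewrite -expr2 sqr_ge0. Qed.

Lemma enorm_ge0 u : 0 <= enorm u.
Proof. exact: sqrtr_ge0. Qed.

Lemma enorm_sq u : enorm u ^+ 2 = dotv u u.
Proof. by rewrite /enorm sqr_sqrtr // dotv_ge0. Qed.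

Lemma dot_expand u v mu :
  dotv (u - mu *: v) (u - mu *: v) = dotv u u - 2 * mu * dotv u v + mu ^+ 2 * dotv v v.
Proof.
rewrite /dotv mulr_sumr mulr_sumr -sumrB -big_split /=.
by apply: eq_bigr => k _; rewrite !mxE; ring.
Qed.

Lemma CS u v : enorm v = 1 -> dotv u v <= enorm u.
Proof.
move=> v1.
have key : forall mu, 0 < mu -> 2 * mu * dotv u v <= enorm u ^+ 2 + mu ^+ 2.
  move=> mu mu0; have := dotv_ge0 (u - mu *: v).
  rewrite dot_expand -enorm_sq -(enorm_sq v) v1 expr1n mulr1 => h; lra.
have [u0|u0] := eqVneq (enorm u) 0.
  rewrite u0; apply/ler_addgt0Pr => e e0; rewrite add0r.
  have := key (2 * e) ltac:(by rewrite mulr_gt0).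
  rewrite u0 expr0n /= add0r => h.
  have h2 : 2 * (2 * e) * dotv u v <= 2 * (2 * e) * e by nra.
  by rewrite ler_pM2l ?mulr_gt0 // in h2.
have upos : 0 < enorm u by rewrite lt_neqAle eq_sym u0 enorm_ge0.
have := key (enorm u) upos => h.
have h2 : 2 * enorm u * dotv u v <= 2 * enorm u * enorm u by nra.
by rewrite ler_pM2l ?mulr_gt0 // in h2.
Qed.

Lemma dot_unit u : enorm u != 0 ->
  dotv u ((enorm u)^-1 *: u) = enorm u /\ enorm ((enorm u)^-1 *: u) = 1.
Proof.
move=> u0.
have upos : 0 < enorm u by rewrite lt_neqAle eq_sym u0 enorm_ge0.
split.
  by rewrite dotvC dotvZ -enorm_sq expr2 mulrA mulVf // mul1r.
rewrite {1}/enorm dotvZ dotvC dotvZ mulrA -enorm_sq expr2 mulrACA mulVf // mulr1.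
by rewrite sqrtr1.
Qed.

Lemma coord_le u k : `|u ord0 k| <= `|u|.
Proof.
rewrite [leRHS]/Num.Def.normr/= mx_normrE.
apply: le_trans; last exact: (le_bigmax _ _ (ord0, k)).
by [].
Qed.

Lemma enorm_le u : enorm u <= d%:R * `|u|.
Proof.
have n0 : 0 <= `|u| by [].
rewrite /enorm -[X in _ <= X]ger0_norm ?mulr_ge0 // -sqrtr_sqr ler_sqrt ?sqr_ge0 //.
apply: (@le_trans _ _ (\sum_(k < d) `|u|^+2)).
  apply: ler_sum => k _; rewrite -expr2 -real_normK ?num_real //.
  by rewrite lerXn2r ?nnegrE // coord_le.
rewrite sumr_const card_ord exprMn.
have X0 : 0 <= `|u| ^+ 2 := sqr_ge0 _.
rewrite -[_ *+ d]mulr_natl; apply: (ler_wpM2r X0).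
rewrite expr2 -natrM ler_nat; case: (d) => // n.
by rewrite leq_pmull.
Qed.

End Vec.

Section VecAn.
Variables (R : realType) (d : nat).

Lemma cont_sum (T : topologicalType) n (F : 'I_n -> T -> R) z :
  (forall j, {for z, continuous (F j)}) ->
  {for z, continuous (fun u => \sum_(j < n) F j u)}.
Proof.
move=> cF.
have : forall s : seq 'I_n, {for z, continuous (fun u => \sum_(j <- s) F j u)}.
  elim=> [|j s IH].
    have -> : (fun u => \sum_(j <- [::]) F j u) = cst 0.
      by apply: funext => u; rewrite big_nil.
    exact: cvg_cst.
  have -> : (fun u => \sum_(k <- j :: s) F k u) = F j + (fun u => \sum_(k <- s) F k u).
    by apply: funext => u; rewrite big_cons.
  exact: continuousD.
by move/(_ (index_enum _)).
Qed.

Lemma dotv_cont (v : 'rV[R]_d) : continuous (fun u : 'rV[R]_d => dotv u v).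
Proof.
move=> u; apply: cont_sum => j.
have c1 : {for u, continuous (fun u : 'rV[R]_d => u ord0 j)}.
  exact: coord_continuous.
have c2 : {for u, continuous (fun _ : 'rV[R]_d => v ord0 j)}.
  exact: cst_continuous.
exact: continuousM c1 c2.
Qed.

Lemma dot_derive (f : R -> 'rV[R]_d) (t : R) l v :
  is_derive t (1:R) f l -> is_derive t (1:R) (fun s => dotv (f s) v) (dotv l v).
Proof.
move=> [df dfl].
have dfj : forall j, is_derive t (1:R) (fun s => f s ord0 j * v ord0 j) (l ord0 j * v ord0 j).
  move=> j.
  have dj : is_derive t (1:R) (fun s => f s ord0 j) (l ord0 j).
    apply: DeriveDef; first exact: ((derivable_mxP f t 1).1 df ord0 j).
    by rewrite -dfl (derive_mx df) mxE.
  have := is_deriveM dj (is_derive_cst (v ord0 j) t 1).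
  rewrite scaler0 add0r => H.
  have -> : (fun s => f s ord0 j * v ord0 j) = (fun s => f s ord0 j) * cst (v ord0 j).
    by apply: funext.
  apply: is_derive_eq H _.
  by rewrite /cst /= mulrC.
have := is_derive_sum dfj.
have -> : (\sum_(j < d) (fun s => f s ord0 j * v ord0 j)) = (fun s => dotv (f s) v).
  by apply: funext => s; rewrite fct_sumE.
by [].
Qed.

End VecAn.

Unset Implicit Arguments.

Unset Implicit Arguments.

Section Main.
Variables (R : realType) (N d : nat) (taubar : R)
  (tau : R -> R) (psi : 'rV[R]_d -> 'rV[R]_d -> R)
  (x0 x : 'I_N -> R -> 'rV[R]_d).
Hypothesis HN : (2 <= N)%N.
Hypothesis tb0 : 0 < taubar.
Hypothesis htau : forall t, 0 <= t -> 0 <= tau t <= taubar.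
Hypothesis hbound : exists M, forall p q, `|psi p q| <= M.
Hypothesis hpos : forall p q, 0 < psi p q.
Hypothesis hsol : hk_solution taubar psi tau x0 x.

Lemma psi_le p q : psi p q <= supnorm psi.
Proof.
apply: le_trans (ler_norm _) _.
have [M HM] := hbound.
apply: (ub_le_sup (E := range (fun p : 'rV[R]_d * 'rV[R]_d => `|psi p.1 p.2|))).
  by exists M => r [pq _ <-]; exact: HM.
by exists (p, q).
Qed.

Lemma subr_ge0_ (p q : R) : p <= q -> 0 <= q - p.
Proof. by rewrite subr_ge0. Qed.

Lemma K_ge0 : 0 <= supnorm psi.
Proof. exact: le_trans (ltW (hpos 0 0)) (psi_le 0 0). Qed.

Definition yv (v : 'rV[R]_d) (k : 'I_N) (t : R) := dotv (x k t) v.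
Definition cc : R := (N.-1)%:R^-1.
Definition ww (k j : 'I_N) (t : R) := psi (x k t) (x j (t - tau t)).

Lemma cc0 : 0 <= cc.
Proof. by rewrite /cc invr_ge0. Qed.

Lemma ccN : cc * (N.-1)%:R <= 1.
Proof.
rewrite /cc mulVf //; rewrite pnatr_eq0 -lt0n.
by move: HN; case: N => // -[].
Qed.

Lemma cx k : {within `[- taubar, +oo[, continuous (x k)}.
Proof. by case: hsol. Qed.

Lemma cy v k : {within `[- taubar, +oo[, continuous (yv v k)}.
Proof.
move=> z; exact: (continuous_comp (cx k z) (@dotv_cont R d v (x k z))).
Qed.

Lemma dy v (k : 'I_N) (t : R) : 0 < t -> is_derive t (1:R) (yv v k)
  (cc * \sum_(j < N | j != k) ww k j t * (yv v j (t - tau t) - yv v k t)).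
Proof.
move=> t0.
have [_ [_ hd]] := hsol.
have H := @dot_derive R d (x k) t _ v (hd k t t0).
apply: is_derive_eq H _.
rewrite /hk_rhs dotvZ dotv_sum; congr (_ * _).
by apply: eq_bigr => j _; rewrite dotvZ dotvB.
Qed.

Lemma cyN v k : {within `[- taubar, +oo[, continuous (fun t => - yv v k t)}.
Proof. by move=> z; apply: continuousN; exact: cy. Qed.

Lemma dyN v (k : 'I_N) (t : R) : 0 < t -> is_derive t (1:R) (fun t => - yv v k t)
  (cc * \sum_(j < N | j != k) ww k j t * ((fun k t => - yv v k t) j (t - tau t) - (fun k t => - yv v k t) k t)).
Proof.
move=> t0; have H := is_deriveN (dy v k t t0).
have -> : (fun t => - yv v k t) = - yv v k by apply: funext.
apply: is_derive_eq H _.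
rewrite -mulrN -sumrN; congr (_ * _).
by apply: eq_bigr => j _; rewrite -mulrN opprB opprK addrC.
Qed.

Definition Wn (n : nat) (s : R) := n%:R * taubar - taubar <= s <= n%:R * taubar.

Lemma N0 : (0 < N)%N.
Proof. by apply: leq_trans HN. Qed.

Definition i0 : 'I_N := Ordinal N0.

Lemma Wn_a n : Wn n (n%:R * taubar).
Proof. by rewrite /Wn lexx andbT lerBlDr lerDl ltW. Qed.

Lemma xbound n i : exists c, Wn n c /\ forall s, Wn n s -> `|x i s| <= `|x i c|.
Proof.
have ab : n%:R * taubar - taubar <= n%:R * taubar by rewrite lerBlDr lerDl ltW.
have sub : `[n%:R * taubar - taubar, n%:R * taubar] `<=` `[- taubar, +oo[.
  move=> s; rewrite /= !in_itv /= => /andP[h1 _]; rewrite andbT.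
  apply: le_trans h1; rewrite lerBrDr addNr mulr_ge0 // ltW //.
have cxi : {within `[n%:R * taubar - taubar, n%:R * taubar], continuous (x i)}.
  exact: continuous_subspaceW sub (cx i).
have cn : {within `[n%:R * taubar - taubar, n%:R * taubar], continuous (fun s => `|x i s|)}.
  move=> z; exact: (continuous_comp (cxi z) (@norm_continuous _ _ (x i z))).
have [c hc Hc] := EVT_max ab cn.
exists c; split; first by move: hc; rewrite in_itv.
by move=> s hs; apply: Hc; rewrite in_itv.
Qed.

Lemma Dn_has_ub n : has_ubound [set r : R | exists (i j : 'I_N) (s t : R),
       n%:R * taubar - taubar <= s <= n%:R * taubar /\
       n%:R * taubar - taubar <= t <= n%:R * taubar /\
       r = enorm (x i s - x j t)].
Proof.
have [cf Hc] := choice (xbound n).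
pose Bm := \big[Num.max/0]_l `|x l (cf l)|.
have hB : forall i s, Wn n s -> `|x i s| <= Bm.
  move=> i s hs; apply: le_trans ((Hc i).2 s hs) _.
  exact: (le_bigmax _ (fun l => `|x l (cf l)|) i).
exists (d%:R * (Bm + Bm)) => r [i [j [s [t [hs [ht ->]]]]]].
apply: le_trans (enorm_le _) _.
apply: (ler_wpM2l (ler0n _ _)).
apply: le_trans (ler_normB _ _) _.
by apply: lerD; apply: hB.
Qed.

Lemma Dn_ub n i j s t : Wn n s -> Wn n t -> enorm (x i s - x j t) <= Dn taubar x n.
Proof.
move=> hs ht; rewrite /Dn; apply: (ub_le_sup (Dn_has_ub n)).
by exists i, j, s, t.
Qed.

Lemma Dn_ge0 n : 0 <= Dn taubar x n.
Proof.
apply: le_trans (Dn_ub n i0 i0 _ _ (Wn_a n) (Wn_a n)).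
exact: enorm_ge0.
Qed.

Lemma window v n : enorm v = 1 -> exists M,
  (forall k s, Wn n s -> yv v k s <= M) /\
  (forall k s, Wn n s -> M - Dn taubar x n <= yv v k s).
Proof.
move=> v1.
pose a := n%:R * taubar.
pose U := [set r | exists k s, Wn n s /\ r = yv v k s].
have diff : forall k l s s', Wn n s -> Wn n s' -> yv v k s <= yv v l s' + Dn taubar x n.
  move=> k l s s' hs hs'; rewrite -lerBlDl /yv -dotvB.
  exact: le_trans (CS _ v1) (Dn_ub n k l s s' hs hs').
have nU : U !=set0 by exists (yv v i0 a); exists i0, a; split => //; exact: Wn_a.
have ubU : ubound U (yv v i0 a + Dn taubar x n).
  by move=> r [k [s [hs ->]]]; apply: diff => //; exact: Wn_a.
exists (sup U); split.
  move=> k s hs; apply: (ub_le_sup (E := U)); first by exists (yv v i0 a + Dn taubar x n).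
  by exists k, s.
move=> k s hs; rewrite lerBlDr; apply: ge_sup nU _ => r [l [s' [hs' ->]]].
exact: diff.
Qed.

Lemma w0 : forall k j t, 0 <= ww k j t.
Proof. by move=> k j t; exact: ltW (hpos _ _). Qed.

Lemma wK : forall k j t, ww k j t <= supnorm psi.
Proof. by move=> k j t; exact: psi_le. Qed.

Lemma a0 n : 0 <= n%:R * taubar.
Proof. by rewrite mulr_ge0 // ltW. Qed.

Lemma inv_up v n M : (forall k s, Wn n s -> yv v k s <= M) ->
  forall k t, n%:R * taubar - taubar <= t -> yv v k t <= M.
Proof.
move=> H.
exact: (invariance R N taubar cc tau ww (yv v) tb0 cc0 w0 htau (cy v) (dy v)
  (n%:R * taubar) M (a0 n) H).
Qed.

Lemma inv_low v n M : (forall k s, Wn n s -> M - Dn taubar x n <= yv v k s) ->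
  forall k t, n%:R * taubar - taubar <= t -> - yv v k t <= - (M - Dn taubar x n).
Proof.
move=> H.
apply: (invariance R N taubar cc tau ww (fun k t => - yv v k t) tb0 cc0 w0 htau (cyN v) (dyN v)
  (n%:R * taubar) (- (M - Dn taubar x n)) (a0 n)).
by move=> k s hs; rewrite lerN2; apply: H.
Qed.

Lemma diam_ge t i j : enorm (x i t - x j t) <= diam x t.
Proof.
apply: le_trans (le_bigmax _ (fun j => enorm (x i t - x j t)) j) _.
exact: (le_bigmax _ (fun i => \big[Num.max/0]_(j < N) enorm (x i t - x j t)) i).
Qed.

Lemma claim1 i j v n t0 t : enorm v = 1 -> n%:R * taubar <= t0 -> t0 <= t ->
  dotv (x i t - x j t) v <=
    expR (- supnorm psi * (t - t0)) * dotv (x i t0 - x j t0) v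
    + (1 - expR (- supnorm psi * (t - t0))) * Dn taubar x n.
Proof.
move=> v1 h0 h1.
have [M [H1 H2]] := window v n v1.
have iu := inv_up v n M H1.
have il := inv_low v n M H2.
have e1 := exp_upper R N taubar cc tau ww (yv v) tb0 cc0 w0 htau (cy v) (dy v)
  (n%:R * taubar) M (supnorm psi) (a0 n) K_ge0 wK ccN iu i t0 t h0 h1.
have e2 := exp_upper R N taubar cc tau ww (fun k t => - yv v k t) tb0 cc0 w0 htau
  (cyN v) (dyN v) (n%:R * taubar) (- (M - Dn taubar x n)) (supnorm psi) (a0 n) K_ge0 wK ccN
  il j t0 t h0 h1.
rewrite !dotvB; rewrite /yv /= in e1 e2 *; lra.
Qed.

Lemma claim2 n : Dn taubar x n.+1 <=
  expR (- supnorm psi * taubar) * diam x (n%:R * taubar)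
  + (1 - expR (- supnorm psi * taubar)) * Dn taubar x n.
Proof.
set K := supnorm psi; set E := expR (- K * taubar); set a := n%:R * taubar.
have K0 : 0 <= K := K_ge0.
have E0 : 0 <= E by rewrite expR_ge0.
have E1 : E <= 1.
  rewrite /E -expR0 ler_expR mulNr oppr_le0 mulr_ge0 // ltW //.
have Sn : n.+1%:R * taubar - taubar = a by rewrite -addn1 natrD mulrDl mul1r addrK.
have Sn2 : n.+1%:R * taubar = a + taubar by rewrite -addn1 natrD mulrDl mul1r.
have D0 := Dn_ge0 n.
rewrite {1}/Dn; apply: ge_sup.
  exists (enorm (x i0 a - x i0 a)); exists i0, i0, a, a.
  by rewrite Sn Sn2 lexx lerDl ltW.
move=> r [i [j [s [t [hs [ht ->]]]]]]; rewrite Sn Sn2 in hs ht.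
have [as1 sa] := andP hs; have [at1 ta] := andP ht.
set u := x i s - x j t.
have [u0|u0] := eqVneq (enorm u) 0.
  rewrite u0; apply: addr_ge0; apply: mulr_ge0 => //.
    by apply: le_trans (enorm_ge0 _) (diam_ge _ i0 i0).
  by rewrite subr_ge0.
have [hdot hv1] := dot_unit u0.
set v := (enorm u)^-1 *: u in hdot hv1.
rewrite -hdot /u dotvB.
have [M [H1 H2]] := window v n hv1.
have iu := inv_up v n M H1.
have il := inv_low v n M H2.
have e1 := exp_upper R N taubar cc tau ww (yv v) tb0 cc0 w0 htau (cy v) (dy v)
  a M K (a0 n) K_ge0 wK ccN iu i a s (lexx a) as1.
have e2 := exp_upper R N taubar cc tau ww (fun k t => - yv v k t) tb0 cc0 w0 htau
  (cyN v) (dyN v) a (- (M - Dn taubar x n)) K (a0 n) K_ge0 wK ccN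
  il j a t (lexx a) at1.
have es : E <= expR (- K * (s - a)).
  rewrite /E ler_expR !mulNr lerN2; apply: (ler_wpM2l K0).
  by rewrite lerBlDl.
have et : E <= expR (- K * (t - a)).
  rewrite /E ler_expR !mulNr lerN2; apply: (ler_wpM2l K0).
  by rewrite lerBlDl.
have yia : yv v i a <= M := H1 i a (Wn_a n).
have yja : M - Dn taubar x n <= yv v j a := H2 j a (Wn_a n).
have p1 := mulr_ge0 (subr_ge0_ _ _ es) (subr_ge0_ _ _ yia).
have p2 := mulr_ge0 (subr_ge0_ _ _ et) (subr_ge0_ _ _ yja).
have dd : yv v i a - yv v j a <= diam x a.
  rewrite /yv -dotvB; apply: le_trans (CS _ hv1) _; exact: diam_ge.
have p3 := ler_wpM2l E0 dd.
rewrite /yv /= in e1 e2 yia yja p1 p2 p3 *.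
lra.
Qed.

End Main.

Theorem lemma2p4 (R : realType) (N d : nat) (taubar : R)
  (tau : R -> R) (psi : 'rV[R]_d -> 'rV[R]_d -> R)
  (x0 x : 'I_N -> R -> 'rV[R]_d) :
  (2 <= N)%N -> (1 <= d)%N -> 0 < taubar ->
  {within `[0, +oo[, continuous tau} ->
  (forall t, 0 <= t -> 0 <= tau t <= taubar) ->
  continuous (fun p : 'rV[R]_d * 'rV[R]_d => psi p.1 p.2) ->
  (exists M, forall p q, `|psi p q| <= M) ->
  (forall p q, 0 < psi p q) ->
  (forall i, {within `[- taubar, 0], continuous (x0 i)}) ->
  hk_solution taubar psi tau x0 x ->
  let K := supnorm psi in
  (forall (i j : 'I_N) (v : 'rV[R]_d) (n : nat) (t0 t : R),
     enorm v = 1 -> n%:R * taubar <= t0 -> t0 <= t ->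
     dotv (x i t - x j t) v <=
       expR (- K * (t - t0)) * dotv (x i t0 - x j t0) v
       + (1 - expR (- K * (t - t0))) * Dn taubar x n) /\
  (forall n : nat,
     Dn taubar x n.+1 <=
       expR (- K * taubar) * diam x (n%:R * taubar)
       + (1 - expR (- K * taubar)) * Dn taubar x n).
Proof.
move=> HN Hd tb0 ctau htau cpsi hb hp cx0 hsol K; split.
- move=> i j v n t0 t v1 h0 h1; rewrite /K.
  by apply: (claim1 R N d taubar tau psi x0 x).
- move=> n; rewrite /K.
  by apply: (claim2 R N d taubar tau psi x0 x).
Qed.
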